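(* Let $p$ be an odd prime, $n$ a positive integer with $\gcd(n,p)=1$, and let $S$ be a simultaneously negacyclic subspace of $\mathbb{F}_p^n\times\mathbb{F}_p^n$. Then $S$ is uniquely negacyclic if and only if every element of $S$ of the form $(\mathbf{0},\mathbf{b})$ has $\mathbf{b}=\mathbf{0}$. Further, if $S$ is uniquely negacyclic with generating pair $(g,f)$, then $S=\{(ag,af):a\in\mathcal{R}\}$ (computed in $\mathcal{R}$).
   Context: Let $N:\mathbb{F}_p^n\to\mathbb{F}_p^n$ be $(u_0,\dots,u_{n-1})\mapsto(-u_{n-1},u_0,\dots,u_{n-2})$; $S$ is simultaneously negacyclic if $(\mathbf{a},\mathbf{b})\in S$ implies $(N\mathbf{a},N\mathbf{b})\in S$. Let $\mathcal{R}=\mathbb{F}_p[X]/\langle X^n+1\rangle$, with vectors $(a_0,\dots,a_{n-1})\in\mathbb{F}_p^n$ identified with polynomials $a_0+a_1X+\cdots+a_{n-1}X^{n-1}\in\mathcal{R}$, so $S$ is also regarded as a subset of $\mathcal{R}\times\mathcal{R}$. Let $F=\{\mathbf{a}:(\mathbf{a},\mathbf{b})\in S\}$; it is an ideal of $\mathcal{R}$; let $g(X)$ be its generator (the monic polynomial of lowest degree in it, a divisor of $X^n+1$). $S$ is called uniquely negacyclic if there is a unique $f\in\mathcal{R}$ with $(g,f)\in S$; the pair $(g,f)$ is then called the generating pair of $S$. *)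

(* Defs.v *)
From HB Require Import structures.
From mathcomp Require Import all_boot all_order all_algebra.
Set Implicit Arguments. Unset Strict Implicit. Unset Printing Implicit Defensive.
Import GRing.Theory.
Local Open Scope ring_scope.

Section Negacyclic.
Variables (F : finFieldType) (n : nat).

(* The modulus X^n + 1 defining R = F[X]/<X^n+1>. *)
Definition negmod : {poly F} := 'X^n + 1.

Definition vpoly (v : 'rV[F]_n) : {poly F} := \sum_(i < n) v 0 i *: 'X^i.

Definition redR (a : {poly F}) : 'rV[F]_n := \row_(i < n) (a %% negmod)`_i.

Definition negshift (v : 'rV[F]_n) : 'rV[F]_n :=
  \row_(i < n) (if (i : nat) == 0%N then - (vpoly v)`_(n.-1)
                else (vpoly v)`_((i : nat).-1)).

Definition is_subspace (S : {set 'rV[F]_n * 'rV[F]_n}) : Prop :=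
  [/\ (0, 0) \in S,
      forall x y, x \in S -> y \in S -> (x.1 + y.1, x.2 + y.2) \in S &
      forall (c : F) x, x \in S -> (c *: x.1, c *: x.2) \in S].

Definition simul_negacyclic (S : {set 'rV[F]_n * 'rV[F]_n}) : Prop :=
  forall a b, (a, b) \in S -> (negshift a, negshift b) \in S.

Definition first_proj (S : {set 'rV[F]_n * 'rV[F]_n}) : {set 'rV[F]_n} :=
  [set a | [exists b, (a, b) \in S]].

(* g is the generator of the ideal first_proj S: the monic polynomial of
   lowest degree in it, a divisor of X^n+1 (for the zero ideal, X^n+1). *)
Definition is_generator (S : {set 'rV[F]_n * 'rV[F]_n}) (g : {poly F}) : Prop :=
  [/\ g \is monic, g %| negmod, redR g \in first_proj S &
      forall a, a \in first_proj S -> a != 0 -> (size g <= size (vpoly a))%N].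

Definition uniquely_negacyclic (S : {set 'rV[F]_n * 'rV[F]_n}) (g : {poly F}) : Prop :=
  exists! f : 'rV[F]_n, (redR g, f) \in S.

End Negacyclic.

(* Main.v *)
Require Import Defs.
From mathcomp Require Import all_boot all_order all_algebra.
Set Implicit Arguments. Unset Strict Implicit. Unset Printing Implicit Defensive.
Import GRing.Theory.
Local Open Scope ring_scope.

Section H.
Variables (F : finFieldType) (n : nat).
Hypothesis n_gt0 : (0 < n)%N.

Lemma size_negmod : size (negmod F n) = n.+1.
Proof. by rewrite /negmod size_polyDl size_polyXn // size_poly1 ltnS. Qed.

Lemma negmod_neq0 : negmod F n != 0.
Proof. by rewrite -size_poly_eq0 size_negmod. Qed.

Lemma coef_vpoly_ord (v : 'rV[F]_n) (i : 'I_n) : (vpoly v)`_i = v 0 i.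
Proof.
rewrite /vpoly coef_sum.
under eq_bigr do rewrite coefZ coefXn.
rewrite (bigD1 i) //= eqxx mulr1 big1 ?addr0 // => j hj.
case: eqP => [e|]; last by rewrite mulr0.
by case/eqP: hj; apply/val_inj.
Qed.

Lemma coef_vpoly_ge (v : 'rV[F]_n) i : (n <= i)%N -> (vpoly v)`_i = 0.
Proof.
move=> hi; rewrite /vpoly coef_sum.
under eq_bigr do rewrite coefZ coefXn.
rewrite big1 // => j _; case: eqP => [e|]; last by rewrite mulr0.
by move: (ltn_ord j); rewrite -e ltnNge hi.
Qed.

Lemma size_vpoly (v : 'rV[F]_n) : (size (vpoly v) <= n)%N.
Proof. by apply/leq_sizeP => j hj; rewrite coef_vpoly_ge. Qed.

Lemma vpolyK (v : 'rV[F]_n) : redR n (vpoly v) = v.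
Proof.
apply/rowP => i; rewrite mxE modp_small ?coef_vpoly_ord //.
by rewrite size_negmod ltnS size_vpoly.
Qed.

Lemma redRK (a : {poly F}) : vpoly (redR n a) = a %% negmod F n.
Proof.
apply/polyP => i; case: (ltnP i n) => hi.
  by rewrite (coef_vpoly_ord _ (Ordinal hi)) mxE.
rewrite coef_vpoly_ge //.
have : (size (a %% negmod F n)%R < n.+1)%N by rewrite -size_negmod ltn_modp negmod_neq0.
by rewrite ltnS => /leq_sizeP ->.
Qed.

Lemma redR_mod (a : {poly F}) : redR n (a %% negmod F n) = redR n a.
Proof. by apply/rowP => i; rewrite !mxE modp_id. Qed.

Lemma redR_eqmod (a b : {poly F}) : a %% negmod F n = b %% negmod F n -> redR n a = redR n b.
Proof. by move=> e; rewrite -redR_mod e redR_mod. Qed.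

Lemma redRD (a b : {poly F}) : redR n (a + b) = redR n a + redR n b.
Proof. by apply/rowP => i; rewrite !mxE modpD coefD. Qed.

Lemma redRN (a : {poly F}) : redR n (- a) = - redR n a.
Proof. by apply/rowP => i; rewrite !mxE modpN coefN. Qed.

Lemma redRZ c (a : {poly F}) : redR n (c *: a) = c *: redR n a.
Proof. by apply/rowP => i; rewrite !mxE modpZl coefZ. Qed.

Lemma redR0 : redR n (0 : {poly F}) = 0.
Proof. by apply/rowP => i; rewrite !mxE mod0p coef0. Qed.

Lemma negshiftE (v : 'rV[F]_n) : negshift v = redR n ('X * vpoly v).
Proof.
set r := 'X * vpoly v - ((vpoly v)`_n.-1)%:P * negmod F n.
have hr : (size r <= n)%N.
  apply/leq_sizeP => j hj.
  rewrite /r coefB coefXM coefCM /negmod coefD coefXn coef1.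
  case: (ltngtP j n) hj => // [hnj|->] _.
    rewrite (gtn_eqF (ltn_trans n_gt0 hnj)) /= addr0 mulr0 subr0.
    by case: j hnj => //= j hnj; rewrite coef_vpoly_ge.
  by rewrite (gtn_eqF n_gt0) /= addr0 mulr1 subrr.
have e : 'X * vpoly v = ((vpoly v)`_n.-1)%:P * negmod F n + r by rewrite /r addrC subrK.
apply/rowP => i; rewrite !mxE e modp_addl_mul_small ?size_negmod ?ltnS //.
rewrite /r coefB coefXM coefCM /negmod coefD coefXn coef1 (ltn_eqF (ltn_ord i)).
by case: (nat_of_ord i == 0%N) => /=; rewrite ?add0r ?addr0 ?mulr1 ?mulr0 ?sub0r ?subr0.
Qed.

End H.

Lemma mainTheorem4_aux (p n : nat) (S : {set 'rV['F_p]_n * 'rV['F_p]_n})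
  (g : {poly 'F_p}) :
  (0 < n)%N ->
  is_subspace S -> simul_negacyclic S -> is_generator S g ->
  (uniquely_negacyclic S g <-> (forall b, (0, b) \in S -> b = 0)) /\
  (forall f : 'rV['F_p]_n, uniquely_negacyclic S g -> (redR n g, f) \in S ->
     S = [set (redR n (vpoly a * g), redR n (vpoly a * vpoly f)) | a : 'rV['F_p]_n]).
Proof.
move=> n_gt0 [h0 hadd hsc] hneg [gmon gdvd gin gmin].
have hsub : forall x1 y1 x2 y2, (x1, y1) \in S -> (x2, y2) \in S -> (x1 - x2, y1 - y2) \in S.
  move=> x1 y1 x2 y2 h1 h2.
  have := hadd _ _ h1 (hsc (-1) _ h2); by rewrite /= !scaleN1r.
have hmul : forall q x y, (x, y) \in S ->
    (redR n (q * vpoly x), redR n (q * vpoly y)) \in S.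
  elim/poly_ind => [|q c IH] x y hxy.
    by rewrite !mul0r redR0.
  have e : forall u : 'rV['F_p]_n, redR n ((q * 'X + c%:P) * vpoly u)
      = redR n (q * vpoly (negshift u)) + c *: u.
    move=> u; rewrite (negshiftE n_gt0) // (redRK n_gt0).
    rewrite (redR_eqmod (a := q * (('X * vpoly u) %% _)) (b := q * ('X * vpoly u))); last by rewrite modp_mul.
    by rewrite mulrDl -mulrA mul_polyC redRD redRZ (vpolyK n_gt0).
  rewrite !e.
  exact: (hadd (_, _) (_, _) (IH _ _ (hneg _ _ hxy)) (hsc c (x, y) hxy)).
have ker_iff : uniquely_negacyclic S g <-> (forall b, (0, b) \in S -> b = 0).
  split.
    case=> f0 [hf0 huniq] b hb.
    have := hadd _ _ hf0 hb; rewrite /= addr0 => /huniq /eqP.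
    by rewrite -subr_eq0 opprD addrA subrr sub0r oppr_eq0 => /eqP.
  move=> hker.
  move: gin; rewrite inE => /existsP [f0 hf0].
  exists f0; split => // f' hf'.
  apply/eqP; rewrite -subr_eq0; apply/eqP; apply: hker.
  by have := hsub _ _ _ _ hf0 hf'; rewrite subrr.
split => // f hu hf.
have hker := (proj1 ker_iff) hu.
have gneq0 : g != 0 by apply: monic_neq0.
have gsize : (size g <= n.+1)%N by rewrite -(size_negmod 'F_p n_gt0) dvdp_leq // negmod_neq0.
have redRg : forall a : {poly 'F_p}, redR n (vpoly (redR n a) * g) = redR n (a * g).
  move=> a; apply: redR_eqmod; rewrite (redRK n_gt0).
  by rewrite mulrC modp_mul mulrC.
have hgin : forall a : 'rV['F_p]_n, (redR n (vpoly a * g), redR n (vpoly a * vpoly f)) \in S.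
  move=> a; have := hmul (vpoly a) _ _ hf.
  rewrite (redRK n_gt0); rewrite (redR_eqmod (a := vpoly a * (g %% _)) (b := vpoly a * g)) //.
  by rewrite modp_mul.
apply/setP => [[x y]]; apply/idP/idP; last first.
  by case/imsetP => a _ [-> ->].
move=> hxy.
set q := vpoly x %/ g; set r := vpoly x %% g.
have ex : vpoly x = q * g + r by rewrite /q /r -divp_eq.
have hr : (redR n r, y - redR n (vpoly (redR n q) * vpoly f)) \in S.
  have := hsub _ _ _ _ hxy (hgin (redR n q)).
  by rewrite redRg -{1}(vpolyK n_gt0 x) ex redRD addrC addKr.
have r0 : r = 0.
  apply/eqP; apply/negPn/negP => rn0.
  have rsz : (size r < size g)%N by rewrite ltn_modp.
  have rr : vpoly (redR n r) = r.
    by rewrite (redRK n_gt0) // modp_small // (size_negmod _ n_gt0) (leq_trans rsz).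
  have : redR n r != 0 by apply: contra rn0 => /eqP e; rewrite -rr e; apply/eqP/polyP => i; rewrite coef0 /vpoly coef_sum big1 // => j _; rewrite mxE coefZ mul0r.
  move=> hne.
  have hmem : redR n r \in first_proj S.
    by rewrite inE; apply/existsP; exists (y - redR n (vpoly (redR n q) * vpoly f)).
  by have := gmin _ hmem hne; rewrite rr leqNgt rsz.
apply/imsetP; exists (redR n q) => //.
have hx : x = redR n (vpoly (redR n q) * g) by rewrite redRg -{1}(vpolyK n_gt0 x) ex r0 addr0.
congr (_, _) => //.
move: hr; rewrite r0 redR0 => /hker /eqP; rewrite subr_eq0 => /eqP //.
Qed.

Theorem mainTheorem4 (p n : nat) (S : {set 'rV['F_p]_n * 'rV['F_p]_n})
  (g : {poly 'F_p}) :
  prime p -> odd p -> (0 < n)%N -> coprime n p ->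
  is_subspace S -> simul_negacyclic S -> is_generator S g ->
  (uniquely_negacyclic S g <-> (forall b, (0, b) \in S -> b = 0)) /\
  (forall f : 'rV['F_p]_n, uniquely_negacyclic S g -> (redR n g, f) \in S ->
     S = [set (redR n (vpoly a * g), redR n (vpoly a * vpoly f)) | a : 'rV['F_p]_n]).
Proof. by move=> _ _ n_gt0 _; apply: mainTheorem4_aux. Qed.
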